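(* Let $A=(a_1,\dots,a_p)$ and $B=(b_1,\dots,b_q)$ be finite lists of voids (notation in the context) ordered by nondecreasing start time, i.e. $S(a_1)\le S(a_2)\le\dots\le S(a_p)$ and $S(b_1)\le\dots\le S(b_q)$. Assume that at least one element of $A$ and at least one element of $B$ has finish time $+\infty$. Fix a real number $T_e$ and a required length $\ell>0$. Run the modified CEVF search: start with the pair $(a,b)=(a_1,b_1)$; while $L_{T_e}(a\cap b)<\ell$, replace $a=a_i$ by $a_{i+1}$ if $F(a)\le F(b)$, and otherwise replace $b=b_j$ by $b_{j+1}$; when $L_{T_e}(a\cap b)\ge \ell$, stop and output the pair $(a,b)$ (the ''scheduling void'' is $a\cap b$). Then: (i) the procedure never runs past the end of either list and terminates after inspecting at most $p+q-1$ pairs; (ii) the output pair $(a^*,b^* )$ is feasible, i.e. $L_{T_e}(a^*\cap b^* )\ge \ell$, and it is optimal: for every pair $(a_i,b_j)\in A\times B$ with $L_{T_e}(a_i\cap b_j)\ge\ell$ one has $S_{T_e}(a^*\cap b^* )\le S_{T_e}(a_i\cap b_j)$. In particular, in the network setting where $A=V^{Rx}$ is the set of all receiver voids (with $p\le MN+R$) and $B=V^G_x$ is the set of group voids of group $x$ (with $q\le N+1$), the algorithm finds the void with the earliest start time satisfying the length criterion in at most $N+MN+R$ steps, so its complexity is $O(MN)$ when $R,N\ll MN$.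
   Context: A void is a time interval $X$ with a start time $S(X)\in\mathbb{R}$ and a finish time $F(X)\in\mathbb{R}\cup\{+\infty\}$, $F(X)\ge S(X)$. For two voids $a,b$ and an earliest admissible time $T_e$, their (constrained) intersection $a\cap b$ has start $S_{T_e}(a\cap b)=\max(T_e,S(a),S(b))$, finish $F(a\cap b)=\min(F(a),F(b))$, and length $L_{T_e}(a\cap b)=F(a\cap b)-S_{T_e}(a\cap b)$ (which is $+\infty$ when both finish times are $+\infty$). A pair $(a,b)$ is feasible if $L_{T_e}(a\cap b)\ge \ell$, where $\ell=g/l+T_{grd}$ is the time needed to transmit the granted $g$ bytes at link rate $l$ plus a guard/tuning time $T_{grd}$. Network setting: an optical line terminal with $R$ receivers serves $M$ groups of $N$ optical network units each ($MN$ units in total). A receiver void is a maximal time interval in which no upstream transmission is scheduled on a given receiver; $V^{Rx}$ is the collection of receiver voids of all receivers, each receiver having one ''horizon'' void with finish time $+\infty$. A group void of group $x$ is a maximal interval during which no unit of group $x$ is scheduled to transmit; $V^G_x$ is their collection, including one horizon void with finish time $+\infty$. $T_e=t+rtt_{c,d}$ is the current time plus the round-trip time of the requesting unit. *)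

(* Defs.v *)
From Stdlib Require Import Reals List Lia.
Open Scope R_scope.

(* A void: start time S in R, finish time F in R ∪ {+oo}; None encodes +oo. *)
Record void := mkVoid { vS : R ; vF : option R }.

Definition void_wf (x : void) : Prop :=
  match vF x with None => True | Some f => vS x <= f end.

Definition Fle (f g : option R) : bool :=
  match f, g with
  | _, None => true
  | None, Some _ => false
  | Some a, Some b => if Rle_dec a b then true else false
  end.

Definition Fmin (f g : option R) : option R :=
  match f, g with
  | None, h => h
  | h, None => h
  | Some a, Some b => Some (Rmin a b)
  end.

Definition S_int (Te : R) (a b : void) : R := Rmax Te (Rmax (vS a) (vS b)).

Definition F_int (a b : void) : option R := Fmin (vF a) (vF b).

(* L_{Te}(a ∩ b) >= ell  (L = +oo when both finishes are +oo) *)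
Definition feasible (Te ell : R) (a b : void) : Prop :=
  match F_int a b with
  | None => True
  | Some f => ell <= f - S_int Te a b
  end.

Definition feasibleb (Te ell : R) (a b : void) : bool :=
  match F_int a b with
  | None => true
  | Some f => if Rle_dec ell (f - S_int Te a b) then true else false
  end.

Definition sorted_by_start (L : list void) : Prop :=
  forall k x y, nth_error L k = Some x -> nth_error L (S k) = Some y ->
    vS x <= vS y.

Definition has_infinite (L : list void) : Prop :=
  exists x, In x L /\ vF x = None.

(* Modified CEVF search. [cevf A B Te ell fuel i j] inspects at most [fuel]
   pairs, starting from the pair (a_i, b_j) (0-based indices). *)
Fixpoint cevf (A B : list void) (Te ell : R) (fuel i j : nat)
  : option (nat * nat) :=
  match fuel with
  | O => None
  | S n =>
    match nth_error A i, nth_error B j with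
    | Some a, Some b =>
        if feasibleb Te ell a b then Some (i, j)
        else if Fle (vF a) (vF b) then cevf A B Te ell n (S i) j
        else cevf A B Te ell n i (S j)
    | _, _ => None
    end
  end.

(* Main.v *)
Require Import Defs.
From Stdlib Require Import Reals List Lia Lra.
Open Scope R_scope.

Ltac dmax := repeat match goal with
  | |- context [Rle_dec ?a ?b] => destruct (Rle_dec a b)
  | H : context [Rle_dec ?a ?b] |- _ => destruct (Rle_dec a b)
  end.

Lemma S_int_mono_r Te a b b' : vS b <= vS b' -> S_int Te a b <= S_int Te a b'.
Proof. intros; unfold S_int, Rmax; dmax; lra. Qed.

Lemma S_int_mono_l Te a a' b : vS a <= vS a' -> S_int Te a b <= S_int Te a' b.
Proof. intros; unfold S_int, Rmax; dmax; lra. Qed.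

Lemma S_int_mono Te a a' b b' : vS a <= vS a' -> vS b <= vS b' ->
  S_int Te a b <= S_int Te a' b'.
Proof. intros; unfold S_int, Rmax; dmax; lra. Qed.

Lemma discard_a Te ell a b b' : vS b <= vS b' -> ~ feasible Te ell a b ->
  Fle (vF a) (vF b) = true -> ~ feasible Te ell a b'.
Proof.
  intros Hs Hf Hle.
  pose proof (S_int_mono_r Te a b b' Hs) as HS.
  unfold feasible, F_int, Fmin, Fle in *.
  destruct (vF a) as [fa|], (vF b) as [fb|], (vF b') as [fb'|]; try discriminate;
  try (exfalso; apply Hf; exact Logic.I);
  unfold Rmin in *; dmax; try discriminate; lra.
Qed.

Lemma discard_b Te ell a a' b : vS a <= vS a' -> ~ feasible Te ell a b ->
  Fle (vF a) (vF b) = false -> ~ feasible Te ell a' b.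
Proof.
  intros Hs Hf Hle.
  pose proof (S_int_mono_l Te a a' b Hs) as HS.
  unfold feasible, F_int, Fmin, Fle in *.
  destruct (vF a) as [fa|], (vF b) as [fb|], (vF a') as [fa'|]; try discriminate;
  try (exfalso; apply Hf; exact Logic.I);
  unfold Rmin in *; dmax; try discriminate; lra.
Qed.

Lemma feasibleb_true Te ell a b : feasibleb Te ell a b = true -> feasible Te ell a b.
Proof. unfold feasibleb, feasible. destruct (F_int a b); dmax; auto; discriminate. Qed.

Lemma feasibleb_false Te ell a b : feasibleb Te ell a b = false -> ~ feasible Te ell a b.
Proof. unfold feasibleb, feasible. destruct (F_int a b); dmax; try discriminate; auto. Qed.

Lemma sorted_mono L : sorted_by_start L -> forall d k x y,
  nth_error L k = Some x -> nth_error L (k + d)%nat = Some y -> vS x <= vS y.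
Proof.
  intros Hs d; induction d as [|d IH]; intros k x y Hx Hy.
  - rewrite Nat.add_0_r in Hy. rewrite Hx in Hy. inversion Hy; lra.
  - assert (Hlt : (k + S d < length L)%nat) by (apply nth_error_Some; congruence).
    destruct (nth_error L (k + d)%nat) eqn:E.
    2:{ apply nth_error_None in E. lia. }
    apply Rle_trans with (vS v). eapply IH; eauto.
    eapply Hs; eauto. replace (S (k + d)) with (k + S d)%nat by lia. exact Hy.
Qed.

Lemma sorted_le L : sorted_by_start L -> forall k m x y, (k <= m)%nat ->
  nth_error L k = Some x -> nth_error L m = Some y -> vS x <= vS y.
Proof.
  intros Hs k m x y Hkm Hx Hy. apply (sorted_mono L Hs (m - k) k); auto.
  replace (k + (m - k))%nat with m by lia. auto.
Qed.

Definition infeas (A B : list void) Te ell i j :=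
  forall a b, nth_error A i = Some a -> nth_error B j = Some b -> ~ feasible Te ell a b.

Lemma key (A B : list void) Te ell I J aI bJ :
  sorted_by_start A -> sorted_by_start B ->
  nth_error A I = Some aI -> vF aI = None ->
  nth_error B J = Some bJ -> vF bJ = None ->
  forall n i j,
  (forall i' j', (i' < i \/ j' < j)%nat -> infeas A B Te ell i' j') ->
  (I + J + 1 <= i + j + n)%nat ->
  exists i0 j0 a b, cevf A B Te ell n i j = Some (i0, j0) /\
    nth_error A i0 = Some a /\ nth_error B j0 = Some b /\ feasible Te ell a b /\
    (forall i' j' a' b', nth_error A i' = Some a' -> nth_error B j' = Some b' ->
       feasible Te ell a' b' -> (i0 <= i' /\ j0 <= j')%nat).
Proof.
  intros HsA HsB HI HaI HJ HbJ.
  assert (FIJ : feasible Te ell aI bJ) by (unfold feasible, F_int; rewrite HaI, HbJ; exact Logic.I).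
  induction n as [|n IH]; intros i j Hinv Hfuel.
  - exfalso.
    assert (i <= I)%nat. { destruct (Nat.le_gt_cases i I); auto.
      exfalso; eapply (Hinv I J); eauto. }
    assert (j <= J)%nat. { destruct (Nat.le_gt_cases j J); auto.
      exfalso; eapply (Hinv I J); eauto. }
    lia.
  - assert (Hi : (i <= I)%nat). { destruct (Nat.le_gt_cases i I); auto.
      exfalso; eapply (Hinv I J); eauto. }
    assert (Hj : (j <= J)%nat). { destruct (Nat.le_gt_cases j J); auto.
      exfalso; eapply (Hinv I J); eauto. }
    destruct (nth_error A i) as [a|] eqn:Ea.
    2:{ apply nth_error_None in Ea. assert (I < length A)%nat by (apply nth_error_Some; congruence). lia. }
    destruct (nth_error B j) as [b|] eqn:Eb.
    2:{ apply nth_error_None in Eb. assert (J < length B)%nat by (apply nth_error_Some; congruence). lia. }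
    simpl. rewrite Ea, Eb.
    destruct (feasibleb Te ell a b) eqn:Fb.
    + exists i, j, a, b. split; [reflexivity|]. split; [auto|]. split; [auto|].
      split; [apply feasibleb_true; auto|].
      intros i' j' a' b' Ha' Hb' Hf.
      destruct (Nat.le_gt_cases i i'); [|exfalso; eapply (Hinv i' j'); eauto].
      destruct (Nat.le_gt_cases j j'); [|exfalso; eapply (Hinv i' j'); eauto].
      auto.
    + apply feasibleb_false in Fb.
      destruct (Fle (vF a) (vF b)) eqn:Fl.
      * apply IH; [|lia]. intros i' j' Hc a' b' Ha' Hb'.
        destruct (Nat.lt_ge_cases i' i) as [Hlt|Hge]; [eapply Hinv; eauto|].
        destruct (Nat.lt_ge_cases j' j) as [Hlt2|Hge2]; [eapply Hinv; eauto|].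
        assert (i' = i) by lia. subst i'. rewrite Ea in Ha'. inversion Ha'; subst a'.
        eapply discard_a; eauto. eapply (sorted_le B HsB j j'); eauto.
      * apply IH; [|lia]. intros i' j' Hc a' b' Ha' Hb'.
        destruct (Nat.lt_ge_cases j' j) as [Hlt|Hge]; [eapply Hinv; eauto|].
        destruct (Nat.lt_ge_cases i' i) as [Hlt2|Hge2]; [eapply Hinv; eauto|].
        assert (j' = j) by lia. subst j'. rewrite Eb in Hb'. inversion Hb'; subst b'.
        eapply discard_b; eauto. eapply (sorted_le A HsA i i'); eauto.
Qed.

Lemma cevf_mono A B Te ell : forall n m i j r, cevf A B Te ell n i j = Some r ->
  (n <= m)%nat -> cevf A B Te ell m i j = Some r.
Proof.
  induction n as [|n IH]; intros m i j r H Hm; [discriminate|].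
  destruct m as [|m]; [lia|]. simpl in *.
  destruct (nth_error A i), (nth_error B j); try discriminate.
  destruct (feasibleb Te ell v v0); auto.
  destruct (Fle (vF v) (vF v0)); apply IH; auto; lia.
Qed.

Theorem theorem1 :
  forall (A B : list void) (Te ell : R),
    (forall x, In x A -> void_wf x) ->
    (forall x, In x B -> void_wf x) ->
    sorted_by_start A -> sorted_by_start B ->
    has_infinite A -> has_infinite B ->
    0 < ell ->
    (* (i)+(ii): with at most p+q-1 inspected pairs, never running past the end
       of a list, the search stops at a feasible, optimal pair *)
    (exists i j a b,
        cevf A B Te ell (length A + length B - 1) 0 0 = Some (i, j) /\
        nth_error A i = Some a /\ nth_error B j = Some b /\
        feasible Te ell a b /\
        (forall a' b', In a' A -> In b' B -> feasible Te ell a' b' ->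
           S_int Te a b <= S_int Te a' b'))
    /\
    (* network corollary: with p <= MN+R and q <= N+1, at most N+MN+R steps *)
    (forall M N R : nat,
        (length A <= M * N + R)%nat -> (length B <= N + 1)%nat ->
        (length A + length B - 1 <= N + M * N + R)%nat /\
        cevf A B Te ell (N + M * N + R) 0 0 =
        cevf A B Te ell (length A + length B - 1) 0 0).
Proof.
  intros A B Te ell _ _ HsA HsB [aI [HaIn HaI]] [bJ [HbIn HbJ]] Hell.
  apply In_nth_error in HaIn as [I HI]. apply In_nth_error in HbIn as [J HJ].
  assert (I < length A)%nat by (apply nth_error_Some; congruence).
  assert (J < length B)%nat by (apply nth_error_Some; congruence).
  destruct (key A B Te ell I J aI bJ HsA HsB HI HaI HJ HbJ
              (length A + length B - 1) 0 0) as [i0 [j0 [a [b [Hc [Ha [Hb [Hf Hopt]]]]]]]].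
  { intros i' j' Hc. lia. }
  { lia. }
  split.
  - exists i0, j0, a, b. split; [auto|]. split; [auto|]. split; [auto|]. split; [auto|].
    intros a' b' Ha' Hb' Hf'.
    apply In_nth_error in Ha' as [i' Hi']. apply In_nth_error in Hb' as [j' Hj'].
    destruct (Hopt i' j' a' b' Hi' Hj' Hf').
    apply S_int_mono; [eapply (sorted_le A HsA i0 i') | eapply (sorted_le B HsB j0 j')]; eauto.
  - intros M N R HA HB. split; [lia|].
    rewrite Hc. apply (cevf_mono _ _ _ _ _ _ _ _ _ Hc). lia.
Qed.
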